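(* Let $\alpha:M_s\to M_s$ be a completely positive linear map on the algebra of complex $s\times s$ matrices. If $\alpha^m=0$ for some integer $m\ge1$, then $\alpha^s=0$; in particular the nilpotency index of $\alpha$ is at most $s$. *)

(* Defs.v *)
From HB Require Import structures.
From mathcomp Require Import all_boot all_order all_algebra.
Set Implicit Arguments. Unset Strict Implicit. Unset Printing Implicit Defensive.
Import Order.TTheory GRing.Theory Num.Theory.
Local Open Scope ring_scope.

Definition adjmx (C : numClosedFieldType) m n (A : 'M[C]_(m, n)) : 'M[C]_(n, m) :=
  (map_mx Num.conj A)^T.

(* An element of M_n(M_s) is given as an n x n array of s x s blocks.
   It is positive (semidefinite) iff its quadratic form  sum_{i,j} x_i^* A_ij x_j
   is >= 0 for every vector (x_i)_i in (C^s)^n  (over C this also forces hermitian). *)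
Definition psd_block (C : numClosedFieldType) (s n : nat)
  (A : 'I_n -> 'I_n -> 'M[C]_s) : Prop :=
  forall x : 'I_n -> 'cV[C]_s,
    0 <= \sum_(i < n) \sum_(j < n) (adjmx (x i) *m A i j *m x j) 0 0.

(* alpha : M_s -> M_s is completely positive: id_n (x) alpha is positive for all n. *)
Definition completely_positive (C : numClosedFieldType) (s : nat)
  (alpha : 'M[C]_s -> 'M[C]_s) : Prop :=
  forall (n : nat) (A : 'I_n -> 'I_n -> 'M[C]_s),
    psd_block A -> psd_block (fun i j => alpha (A i j)).

(* Main.v *)
Require Import Defs.
From mathcomp Require Import all_boot all_order all_algebra.
From mathcomp Require Import ring.
Import Order.TTheory GRing.Theory Num.Theory.
Local Open Scope ring_scope.
Set Implicit Arguments. Unset Strict Implicit. Unset Printing Implicit Defensive.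

Section Basics.
Variable C : numClosedFieldType.

Lemma adjmxM m n p (A : 'M[C]_(m,n)) (B : 'M[C]_(n,p)) :
  adjmx (A *m B) = adjmx B *m adjmx A.
Proof. by rewrite /adjmx map_mxM trmx_mul. Qed.

Lemma adjmxK m n (A : 'M[C]_(m,n)) : adjmx (adjmx A) = A.
Proof. by apply/matrixP=> i j; rewrite !mxE conjCK. Qed.

Lemma adjmxD m n (A B : 'M[C]_(m,n)) : adjmx (A + B) = adjmx A + adjmx B.
Proof. by apply/matrixP=> i j; rewrite !mxE rmorphD. Qed.

Lemma adjmxZ m n a (A : 'M[C]_(m,n)) : adjmx (a *: A) = a^* *: adjmx A.
Proof. by apply/matrixP=> i j; rewrite !mxE rmorphM. Qed.

Lemma adjmx_tr m n (A : 'M[C]_(m,n)) : adjmx A = map_mx Num.conj (A^T).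
Proof. by rewrite /adjmx map_trmx. Qed.

Lemma adjmx_delta n (i : 'I_n) : adjmx (delta_mx i 0 : 'cV[C]_n) = delta_mx 0 i.
Proof. by apply/matrixP=> a b; rewrite !mxE rmorph_nat andbC. Qed.

Variable s : nat.
Implicit Types (A B X Y : 'M[C]_s) (x y : 'cV[C]_s).

Definition bf A x y := (adjmx x *m A *m y) 0 0.
Definition qf A x := bf A x x.
Definition psd A := forall x, 0 <= qf A x.

Lemma bf_delta A i j : bf A (delta_mx i 0) (delta_mx j 0) = A i j.
Proof. by rewrite /bf adjmx_delta -rowE -colE !mxE. Qed.

Lemma qf_cong A (U : 'M[C]_s) y : qf A (U *m y) = qf (adjmx U *m A *m U) y.
Proof. by rewrite /qf /bf adjmxM !mulmxA. Qed.

Lemma qfB A B x : qf (A - B) x = qf A x - qf B x.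
Proof. by rewrite /qf /bf mulmxBr mulmxBl !mxE. Qed.

Lemma qfZ a A x : qf (a *: A) x = a * qf A x.
Proof. by rewrite /qf /bf -scalemxAr -scalemxAl mxE. Qed.

Lemma qf_expand A x y t :
  qf A (x + t *: y) = qf A x + t * bf A x y + t^* * bf A y x + t^* * t * qf A y.
Proof.
rewrite /qf /bf adjmxD adjmxZ !(mulmxDl, mulmxDr) -!scalemxAl -!scalemxAr.
move: (adjmx x *m A *m x) (adjmx y *m A *m x) (adjmx x *m A *m y) (adjmx y *m A *m y) => P Q R S.
rewrite !mxE; ring.
Qed.

Lemma psd_real A x : psd A -> qf A x \is Num.real.
Proof. by move=> pA; apply: ger0_real. Qed.

Lemma psd_herm A : psd A -> forall i j, A i j = (A j i)^*.
Proof.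
move=> pA i j.
set x : 'cV[C]_s := delta_mx i 0; set y : 'cV[C]_s := delta_mx j 0.
have e1 := qf_expand A x y 1; have e2 := qf_expand A x y 'i.
rewrite rmorph1 !mul1r in e1.
have r1 : (bf A x y + bf A y x) \is Num.real.
  have -> : bf A x y + bf A y x = qf A (x + 1 *: y) - qf A x - qf A y.
    by rewrite e1; ring.
  by rewrite !rpredB ?psd_real.
have r2 : ('i * bf A x y - 'i * bf A y x) \is Num.real.
  have -> : 'i * bf A x y - 'i * bf A y x = qf A (x + 'i *: y) - qf A x - qf A y.
    have hi : - 'i * 'i = 1 :> C by rewrite mulNr -expr2 sqrCi opprK.
    by rewrite e2 conjCi hi; ring.
  by rewrite !rpredB ?psd_real.
move/CrealP: r1; move/CrealP: r2.
rewrite !rmorphB !rmorphD !rmorphM /= conjCi !bf_delta.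
move=> h2 h1.
have h2' : - (A i j)^* + (A j i)^* = A i j - A j i.
  apply: (mulfI (neq0Ci C)).
  transitivity (- 'i * (A i j)^* - - 'i * (A j i)^*); first ring.
  rewrite h2; ring.
have h3 : 2 * A i j = 2 * (A j i)^*.
  have -> : 2 * A i j = (A i j + A j i) + (A i j - A j i) by ring.
  rewrite -h1 -h2'; ring.
have n2 : (2 : C) != 0 by rewrite pnatr_eq0.
exact: (mulfI n2 h3).
Qed.


Lemma qf_diag (d : 'rV[C]_s) y :
  qf (diag_mx d) y = \sum_i d 0 i * (y i 0 * (y i 0)^*).
Proof.
rewrite /qf /bf mul_mx_diag mxE; apply: eq_bigr => j _; rewrite !mxE; ring.
Qed.

Lemma psd_spec A : psd A -> exists (U : 'M[C]_s) (d : 'rV[C]_s),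
  [/\ U *m adjmx U = 1%:M, adjmx U *m U = 1%:M,
      A = adjmx U *m diag_mx d *m U & forall i, 0 <= d 0 i].
Proof.
move=> pA.
have hA : A \is hermsymmx.
  apply/is_hermitianmxP; rewrite expr0 scale1r; apply/matrixP=> i j.
  by rewrite !mxE; exact: psd_herm.
have /orthomx_spectralP hE := hermitian_normalmx hA.
set U := spectralmx A in hE; set d := spectral_diag A in hE.
have Uu : U \is unitarymx := spectral_unitarymx A.
have UU : U *m adjmx U = 1%:M by rewrite adjmx_tr; apply/unitarymxP.
have UU' := mulmx1C UU.
have AE : A = adjmx U *m diag_mx d *m U by rewrite {1}hE invmx_unitary // adjmx_tr.
exists U, d; split => // i.
have := pA (adjmx U *m delta_mx i 0).
rewrite qf_cong AE adjmxK !mulmxA UU mul1mx -mulmxA UU mulmx1.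
by rewrite /qf bf_delta mxE eqxx mulr1n.
Qed.

Lemma psd_ker A x : psd A -> qf A x = 0 -> A *m x = 0.
Proof.
move=> pA; case: (psd_spec pA) => U [d [UU UU' AE dge]].
rewrite AE -qf_cong qf_diag => hs.
have H : forall i, d 0 i * ((U *m x) i 0 * ((U *m x) i 0)^*) = 0.
  move=> i; apply: (psumr_eq0P _ hs) => // j _.
  by apply: mulr_ge0 => //; exact: mul_conjC_ge0.
have -> : adjmx U *m diag_mx d *m U *m x = adjmx U *m (diag_mx d *m (U *m x)).
  by rewrite !mulmxA.
suff -> : diag_mx d *m (U *m x) = 0 by rewrite mulmx0.
apply/matrixP => i k; rewrite mul_diag_mx [in RHS]mxE [in LHS]mxE.
rewrite (ord1 k); have /eqP := H i; rewrite mulf_eq0 mul_conjC_eq0.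
by case/orP => /eqP ->; rewrite ?mul0r ?mulr0.
Qed.


Lemma qfE A y : qf A y = \sum_a \sum_b (y a 0)^* * A a b * y b 0.
Proof.
rewrite /qf /bf mxE; under eq_bigr do rewrite mxE mulr_suml.
rewrite exchange_big; apply: eq_bigr => a _; apply: eq_bigr => b _.
by rewrite /adjmx !mxE.
Qed.

Lemma amgm (p q : C) : 0 <= p -> 0 <= q -> p * q <= p ^+ 2 + q ^+ 2.
Proof.
move=> hp hq.
case/orP: (real_leVge (ger0_real hp) (ger0_real hq)) => h.
  apply: (le_trans (ler_wpM2r hq h)); rewrite -expr2 lerDr.
  exact: exprn_ge0.
apply: (le_trans (ler_wpM2l hp h)); rewrite -expr2 lerDl.
exact: exprn_ge0.
Qed.

Lemma psd_dom X Y : psd X -> psd Y -> (forall x, X *m x = 0 -> Y *m x = 0) ->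
  exists c, 0 <= c /\ forall x, qf Y x <= c * qf X x.
Proof.
move=> pX pY hker.
case: (psd_spec pX) => U [d [UU UU' XE dge]].
set Uh := adjmx U.
set Y' := U *m Y *m Uh.
have Y'E : Y' = adjmx Uh *m Y *m Uh by rewrite /Uh adjmxK.
have pY' : psd Y' by move=> z; rewrite Y'E -qf_cong; exact: pY.
have hY' := psd_herm pY'.
have col0 : forall a b, d 0 b = 0 -> Y' a b = 0.
  move=> a b db.
  set e : 'cV[C]_s := delta_mx b 0.
  have hX : X *m (Uh *m e) = 0.
    have -> : X *m (Uh *m e) = Uh *m (diag_mx d *m (U *m Uh *m e)) by rewrite XE !mulmxA.
    rewrite UU mul1mx.
    suff -> : diag_mx d *m e = 0 by rewrite mulmx0.
    rewrite mul_diag_mx; apply/matrixP=> i k; rewrite !mxE.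
    have [->|nib] := eqVneq i b; first by rewrite db mul0r.
    by rewrite mulr0.
  have hY := hker _ hX.
  have -> : Y' a b = (Y' *m e) a 0.
    rewrite /e -colE. by rewrite /col mxE.
  by rewrite /Y' -!mulmxA hY !mulmx0 mxE.
have row0 : forall a b, d 0 a = 0 -> Y' a b = 0.
  by move=> a b da; rewrite hY' col0 // rmorph0.
set S := \sum_k (d 0 k)^-1.
set M := \sum_a \sum_b `|Y' a b|.
have S0 : 0 <= S by apply: sumr_ge0 => k _; rewrite invr_ge0.
have M0 : 0 <= M by apply: sumr_ge0 => a _; apply: sumr_ge0 => b _.
exists (M * 2 * S); split.
  by apply: mulr_ge0 => //; apply: mulr_ge0.
move=> x; set y := U *m x.
have qY : qf Y x = qf Y' y.
  by rewrite Y'E -qf_cong /y /Uh mulmxA UU' mul1mx.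
have qX : qf X x = \sum_i d 0 i * (y i 0 * (y i 0)^*).
  by rewrite XE -qf_cong qf_diag.
set T := \sum_i _ in qX.
have g0 : forall a, 0 <= d 0 a * (y a 0 * (y a 0)^*).
  by move=> a; apply: mulr_ge0 => //; exact: mul_conjC_ge0.
have T0 : 0 <= T by apply: sumr_ge0 => a _.
have gT : forall a, d 0 a * (y a 0 * (y a 0)^*) <= T.
  move=> a; rewrite /T (bigD1 a) //= lerDl.
  by apply: sumr_ge0 => i _.
have yb : forall a, d 0 a != 0 -> `|y a 0| ^+ 2 <= S * T.
  move=> a da; rewrite normCK -(mulKf da (y a 0 * (y a 0)^*)).
  apply: (le_trans (ler_wpM2l _ (gT a))); first by rewrite invr_ge0.
  apply: ler_wpM2r => //; rewrite /S (bigD1 a) //= lerDl.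
  by apply: sumr_ge0 => k _; rewrite invr_ge0.
have term : forall a b,
    `|(y a 0)^* * Y' a b * y b 0| <= `|Y' a b| * (2 * S * T).
  move=> a b.
  have [da|da] := eqVneq (d 0 a) 0.
    by rewrite row0 // mulr0 mul0r normr0 mul0r.
  have [db|db] := eqVneq (d 0 b) 0.
    by rewrite col0 // mulr0 mul0r normr0 mul0r.
  rewrite !normrM norm_conjC mulrAC mulrC; apply: ler_wpM2l => //.
  apply: (le_trans (amgm (normr_ge0 _) (normr_ge0 _))).
  have -> : 2 * S * T = S * T + S * T by ring.
  by apply: lerD; apply: yb.
rewrite qY qX; apply: (le_trans (real_ler_norm (psd_real _ pY'))).
rewrite qfE; apply: (le_trans (ler_norm_sum _ _ _)).
apply: (@le_trans _ _ (\sum_a \sum_b `|Y' a b| * (2 * S * T))).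
  apply: ler_sum => a _; apply: (le_trans (ler_norm_sum _ _ _)).
  by apply: ler_sum => b _; exact: term.
have -> : M * 2 * S * T = M * (2 * S * T) by ring.
rewrite /M mulr_suml; apply: ler_sum => a _; rewrite mulr_suml.
by apply: ler_sum => b _.
Qed.

End Basics.

Section Alpha.
Variables (C : numClosedFieldType) (s : nat) (alpha : {linear 'M[C]_s -> 'M[C]_s}).
Hypothesis cp : completely_positive alpha.
Implicit Types (X Y : 'M[C]_s) (x : 'cV[C]_s).

Lemma alpha_pos X : psd X -> psd (alpha X).
Proof.
move=> pA x.
have := @cp 1 (fun _ _ => X) _ (fun _ => x).
rewrite !big_ord1; apply.
by move=> y; rewrite !big_ord1; exact: pA.
Qed.

Lemma psd1 : psd (1%:M : 'M[C]_s).
Proof.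
move=> x; rewrite /qf /bf mulmx1 mxE; apply: sumr_ge0 => j _.
by rewrite /adjmx !mxE mulrC; exact: mul_conjC_ge0.
Qed.

Lemma psd_iter k X : psd X -> psd (iter k alpha X).
Proof. by move=> pX; elim: k => //= k IH; exact: alpha_pos. Qed.

Lemma kmono X Y : psd X -> psd Y -> (forall x, X *m x = 0 -> Y *m x = 0) ->
  forall x, alpha X *m x = 0 -> alpha Y *m x = 0.
Proof.
move=> pX pY hker.
have [c [c0 hc]] := psd_dom pX pY hker.
have pD : psd (c *: X - Y) by move=> z; rewrite qfB qfZ subr_ge0; exact: hc.
have := alpha_pos pD; rewrite linearB linearZ /= => pD'.
move=> x hx; apply: psd_ker (alpha_pos pY) _.
have h0 : qf (alpha X) x = 0 by rewrite /qf /bf -mulmxA hx mulmx0 mxE.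
apply/eqP; rewrite eq_le; apply/andP; split; last exact: alpha_pos pY x.
by have := pD' x; rewrite qfB qfZ h0 mulr0 sub0r oppr_ge0.
Qed.

Lemma kmono_iter k X Y : psd X -> psd Y -> (forall x, X *m x = 0 -> Y *m x = 0) ->
  forall x, iter k alpha X *m x = 0 -> iter k alpha Y *m x = 0.
Proof.
move=> pX pY hker; elim: k => // k IH /=.
by apply: kmono => //; exact: psd_iter.
Qed.

Lemma iter_lin k a X Y :
  iter k alpha (a *: X + Y) = a *: iter k alpha X + iter k alpha Y.
Proof. by elim: k => //= k ->; rewrite linearP. Qed.

Lemma iter0 k : iter k alpha 0 = 0.
Proof. by elim: k => //= k ->; rewrite linear0. Qed.

Definition N k x := iter k alpha 1%:M *m x = 0.
Definition K k := kermx (iter k alpha 1%:M)^T.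

Lemma F1 k x : N k x -> N k.+1 x.
Proof.
rewrite /N iterSr; apply: (kmono_iter psd1 (alpha_pos psd1)) => z.
by rewrite mul1mx => ->; rewrite mulmx0.
Qed.

Lemma F2 k : (forall x, N k.+1 x -> N k x) -> forall x, N k.+2 x -> N k.+1 x.
Proof.
move=> H; rewrite /N /=; apply: kmono; try exact: psd_iter psd1.
  exact: (psd_iter k.+1 psd1).
exact: H.
Qed.

Lemma memK k (r : 'rV[C]_s) : (r <= K k)%MS = (iter k alpha 1%:M *m r^T == 0).
Proof. by rewrite sub_kermx -trmx_eq0 trmx_mul trmxK. Qed.

Lemma subK j k : (forall x, N j x -> N k x) -> (K j <= K k)%MS.
Proof.
move=> H; apply/row_subP => i; have := row_sub i (K j).
by rewrite !memK => /eqP h; apply/eqP; apply: H.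
Qed.

Lemma Ksub j k x : (K j <= K k)%MS -> N j x -> N k x.
Proof.
move=> sJK; rewrite /N => h.
have : (x^T <= K j)%MS by rewrite memK trmxK h.
by move/submx_trans => /(_ _ _ sJK); rewrite memK trmxK => /eqP.
Qed.

Lemma fullK k : row_full (K k) <-> forall x, N k x.
Proof.
split.
  move=> f x; have : (x^T <= K k)%MS by exact: submx_full.
  by rewrite memK trmxK => /eqP.
move=> H; rewrite -sub1mx; apply/row_subP => i; rewrite memK; apply/eqP.
exact: H.
Qed.

Lemma Fiter m k x : N m x -> N (m + k) x.
Proof. by elim: k => [|k IH]; rewrite ?addn0 // addnS => /IH /F1. Qed.

Lemma rank_claim m : (forall X, iter m alpha X = 0) ->
  forall k, row_full (K k) || (k <= \rank (K k))%N.
Proof.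
move=> hm; elim=> [|k IH]; first by rewrite leq0n orbT.
case fk: (row_full (K k)).
  by apply/orP; left; apply/fullK => x; apply: F1; move/fullK: fk; apply.
move: IH; rewrite fk /= => hk.
have sub : (K k <= K k.+1)%MS by apply: subK => x; exact: F1.
have [hle heq] := mxrank_leqif_sup sub.
case: (ltnP (\rank (K k)) (\rank (K k.+1))) => hr.
  by rewrite (leq_ltn_trans hk hr) orbT.
have back : (K k.+1 <= K k)%MS by rewrite -heq eqn_leq hr hle.
have stab0 : forall x, N k.+1 x -> N k x by move=> x; exact: Ksub.
have stab : forall i x, N (k + i).+1 x -> N (k + i) x.
  elim=> [|i IHi]; first by rewrite addn0.
  by rewrite addnS; apply: F2.
have chain : forall i x, N (k + i) x -> N k x.
  elim=> [|i IHi] x; first by rewrite addn0.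
  by rewrite addnS => /stab /IHi.
have : forall x, N k x.
  move=> x; apply: (chain m); rewrite addnC; apply: Fiter.
  by rewrite /N hm mul0mx.
by move/fullK; rewrite fk.
Qed.

Lemma iter_s_one m : (forall X, iter m alpha X = 0) -> iter s alpha 1%:M = 0.
Proof.
move=> hm; have := rank_claim hm s.
have -> : (s <= \rank (K s))%N = row_full (K s).
  by rewrite /row_full eqn_leq rank_leq_col.
rewrite orbb => /fullK H.
apply/matrixP => i j; have := H (delta_mx j 0); rewrite /N -colE.
by move/matrixP/(_ i 0); rewrite !mxE.
Qed.

End Alpha.

Section Polar.
Variables (C : numClosedFieldType) (s : nat).

Lemma psd_rank1 (u : 'cV[C]_s) : psd (u *m adjmx u).
Proof.
move=> x; rewrite /qf /bf.
have -> : adjmx x *m (u *m adjmx u) *m x = (adjmx x *m u) *m adjmx (adjmx x *m u) by rewrite adjmxM adjmxK !mulmxA.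
move: (adjmx x *m u) => w.
rewrite mxE big_ord1 /adjmx !mxE; exact: mul_conjC_ge0.
Qed.

Definition P (v w : 'cV[C]_s) (l : C) := (v + l *: w) *m adjmx (v + l *: w).

Lemma polar (v w : 'cV[C]_s) :
  4 *: (v *m adjmx w) = P v w 1 - P v w (-1) + 'i *: P v w 'i - 'i *: P v w (- 'i).
Proof.
apply/matrixP => a b; rewrite /P !mxE !big_ord1 !mxE.
rewrite !rmorphD !rmorphM /= !rmorphN /= !rmorph1 conjCi.
have hj : 'i * 'i = -1 :> C by rewrite -expr2 sqrCi.
move: hj; move: ('i : C) (v a 0) (w a 0) ((v b 0)^*) ((w b 0)^*) => j x1 x2 y1 y2 hj.
transitivity (4 * x1 * y2 + (j * j + 1) * (2 * x2 * y1 - 2 * x1 * y2)); last ring.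
by rewrite hj addNr mul0r addr0 mulrA.
Qed.

End Polar.

Unset Implicit Arguments. Set Strict Implicit. Set Printing Implicit Defensive.

Theorem lemma8p4 (C : numClosedFieldType) (s : nat)
  (alpha : {linear 'M[C]_s -> 'M[C]_s}) (m : nat) :
  completely_positive alpha ->
  (1 <= m)%N ->
  (forall X : 'M[C]_s, iter m alpha X = 0) ->
  forall X : 'M[C]_s, iter s alpha X = 0.
Proof.
move=> cp _ hm.
have h1 := iter_s_one cp hm.
have hpsd : forall Y, psd Y -> iter s alpha Y = 0.
  move=> Y pY.
  have H : forall x : 'cV[C]_s, iter s alpha Y *m x = 0.
    move=> x; apply: (kmono_iter cp (k:=s) (@psd1 C s) pY); last by rewrite h1 mul0mx.
    by move=> z; rewrite mul1mx => ->; rewrite mulmx0.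
  apply/matrixP => i j; have := H (delta_mx j 0); rewrite -colE.
  by move/matrixP/(_ i 0); rewrite !mxE.
have ZZ : forall a X, iter s alpha X = 0 -> iter s alpha (a *: X) = 0.
  by move=> a X hX; rewrite -[a *: X]addr0 iter_lin hX iter0 scaler0 addr0.
have ZD : forall X Y, iter s alpha X = 0 -> iter s alpha Y = 0 ->
    iter s alpha (X + Y) = 0.
  by move=> X Y hX hY; rewrite -[X]scale1r iter_lin hX hY scaler0 addr0.
have ZB : forall X Y, iter s alpha X = 0 -> iter s alpha Y = 0 ->
    iter s alpha (X - Y) = 0.
  by move=> X Y hX hY; apply: (ZD) => //; rewrite -scaleN1r; exact: ZZ.
have Zdelta : forall i j, iter s alpha (delta_mx i j) = 0.
  move=> i j.
  have E : delta_mx i j = (delta_mx i 0 : 'cV[C]_s) *m adjmx (delta_mx j 0 : 'cV[C]_s).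
    by rewrite adjmx_delta mul_delta_mx.
  have h4 : iter s alpha (4 *: delta_mx i j) = 0.
    have hP : forall l, iter s alpha (P (delta_mx i 0 : 'cV[C]_s) (delta_mx j 0) l) = 0.
      by move=> l; apply: (hpsd); exact: psd_rank1.
    rewrite E polar.
    apply: (ZB); last by apply: (ZZ); apply: (hP).
    apply: (ZD); last by apply: (ZZ); apply: (hP).
    by apply: (ZB); apply: (hP).
  move: h4; rewrite -[4 *: _]addr0 iter_lin iter0 addr0 => /eqP.
  by rewrite scaler_eq0 pnatr_eq0 /= => /eqP.
move=> X; rewrite (matrix_sum_delta X).
apply: (big_ind (fun M => iter s alpha M = 0)) => //; first exact: iter0.
move=> i _; apply: (big_ind (fun M => iter s alpha M = 0)) => //; first exact: iter0.
by move=> j _; apply: (ZZ).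
Qed.
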